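(* Let $n\ge2$, let $r_1,r_2>0$ and let $u,v\in S^{n-1}$ be such that $u$ is not parallel to $v$. Then $C^{-}(u,r_1)\cap C^{-}(v,r_2)\in\mathcal{C}_e^n$.
   Context: For $x,y\in\mathbb{R}^n$ let $[x,y]=\sqrt{|x|^2|y|^2-(x\cdot y)^2}$. For $u\in S^{n-1}$ and $r>0$, the closed solid cylinder with axis $\{tu:t\in\mathbb{R}\}$ and base radius $r$ is $C^{-}(u,r)=\{x\in\mathbb{R}^n: [x,u]\le r\}$. A convex body is a compact convex set with nonempty interior. $\mathcal{C}_e^n$ denotes the class of origin-symmetric convex bodies in $\mathbb{R}^n$ that are intersections of (a family of) closed solid cylinders $C^{-}(u,r)$, $u\in S^{n-1}$, $r>0$. *)

(* Defs.v *)
From mathcomp Require Import all_boot all_order all_algebra.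
From mathcomp Require Import all_classical all_reals topology normedtype matrix_topology matrix_normedtype.
Set Implicit Arguments. Unset Strict Implicit. Unset Printing Implicit Defensive.
Import Order.TTheory GRing.Theory Num.Theory numFieldTopology.Exports numFieldNormedType.Exports.
Local Open Scope ring_scope.
Local Open Scope classical_set_scope.

Section Defs.
Variables (R : realType) (n : nat).
Implicit Types (x y u : 'rV[R]_n) (A : set 'rV[R]_n).

Definition dotv x y : R := \sum_(i < n) x ord0 i * y ord0 i.

Definition unit_vec u : Prop := dotv u u = 1.

Definition brk x y : R := Num.sqrt (dotv x x * dotv y y - (dotv x y) ^+ 2).

Definition cyl u (r : R) : set 'rV[R]_n := [set x | brk x u <= r].

Definition convex A : Prop :=
  forall x y (t : R), A x -> A y -> 0 <= t -> t <= 1 -> A (t *: x + (1 - t) *: y).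

Definition convex_body A : Prop :=
  compact A /\ convex A /\ (interior A !=set0).

Definition origin_symmetric A : Prop := forall x, A x -> A (- x).

Definition class_Ce A : Prop :=
  convex_body A /\ origin_symmetric A /\
  exists F : set ('rV[R]_n * R),
    (forall p, F p -> unit_vec p.1 /\ 0 < p.2) /\
    A = \bigcap_(p in F) cyl p.1 p.2.

End Defs.

(* Main.v *)
Require Import Defs.
From mathcomp Require Import all_boot all_order all_algebra.
From mathcomp Require Import all_classical all_reals topology normedtype matrix_topology matrix_normedtype.
From mathcomp Require Import ring lra.
Import Order.TTheory GRing.Theory Num.Theory numFieldTopology.Exports numFieldNormedType.Exports.
Local Open Scope ring_scope.
Local Open Scope classical_set_scope.

Section Alg.
Context {R : realType} {n : nat}.
Implicit Types (x y z u : 'rV[R]_n).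

Lemma dotvC x y : dotv x y = dotv y x.
Proof. by apply: eq_bigr => i _; rewrite mulrC. Qed.

Lemma dotvDl x y z : dotv (x + y) z = dotv x z + dotv y z.
Proof. by rewrite /dotv -big_split; apply: eq_bigr => i _; rewrite mxE mulrDl. Qed.

Lemma dotvZl (a : R) x z : dotv (a *: x) z = a * dotv x z.
Proof. by rewrite /dotv mulr_sumr; apply: eq_bigr => i _; rewrite mxE mulrA. Qed.

Lemma dotvNl x z : dotv (- x) z = - dotv x z.
Proof. by rewrite -scaleN1r dotvZl mulN1r. Qed.

Lemma dotvDr x y z : dotv z (x + y) = dotv z x + dotv z y.
Proof. by rewrite dotvC dotvDl !(dotvC z). Qed.

Lemma dotvZr (a : R) x z : dotv z (a *: x) = a * dotv z x.
Proof. by rewrite dotvC dotvZl dotvC. Qed.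

Lemma dotvNr x z : dotv z (- x) = - dotv z x.
Proof. by rewrite dotvC dotvNl dotvC. Qed.

Lemma dotv_ge0 x : 0 <= dotv x x.
Proof. by apply: sumr_ge0 => i _; rewrite -expr2 sqr_ge0. Qed.

Lemma dotv_eq0 x : dotv x x = 0 -> x = 0.
Proof.
move=> /eqP; rewrite psumr_eq0; last by move=> i _; rewrite -expr2 sqr_ge0.
move=> /allP H; apply/rowP => i; rewrite mxE.
have := H i (mem_index_enum i); rewrite implyTb mulf_eq0 orbb => /eqP //.
Qed.

Lemma coord_le x i : x ord0 i ^+ 2 <= dotv x x.
Proof.
rewrite /dotv (bigD1 i) //= -expr2 lerDl.
by apply: sumr_ge0 => j _; rewrite -expr2 sqr_ge0.
Qed.

Lemma CS x y : dotv x y ^+ 2 <= dotv x x * dotv y y.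
Proof.
have [y0|ypos] := eqVneq (dotv y y) 0.
  rewrite y0 mulr0 (@dotv_eq0 y y0) /dotv big1 ?expr0n // => i _.
  by rewrite mxE mulr0.
have yp : 0 < dotv y y by rewrite lt_def ypos dotv_ge0.
have := dotv_ge0 (dotv y y *: x - dotv x y *: y).
rewrite !(dotvDl, dotvDr, dotvZl, dotvZr, dotvNl, dotvNr) (dotvC y x).
move=> h.
have : 0 <= dotv y y * (dotv y y * dotv x x - dotv x y ^+ 2) by nra.
rewrite pmulr_rge0 // subr_ge0 => h2; nra.
Qed.

End Alg.

Section Cyl.
Context {R : realType} {n : nat}.
Implicit Types (x y z u : 'rV[R]_n).

Definition qf u x := dotv x x - dotv x u ^+ 2.

Lemma qf_ge0 u x : unit_vec u -> 0 <= qf u x.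
Proof. move=> hu; have := CS x u; rewrite hu mulr1 /qf subr_ge0 //. Qed.

Lemma cylE u r : unit_vec u -> 0 < r -> cyl u r = [set x | qf u x <= r ^+ 2].
Proof.
move=> hu r0.
have E s : (Num.sqrt s <= r) = (s <= r ^+ 2).
  have hr : Num.sqrt (r ^+ 2) = r by rewrite sqrtr_sqr ger0_norm // ltW.
  by rewrite -{1}hr ler_sqrt // sqr_ge0.
apply/seteqP; split => x; rewrite /cyl /brk /unit_vec /= in hu *; rewrite hu mulr1 E //.
Qed.

Lemma qf_conv u x y (t : R) : unit_vec u -> 0 <= t -> t <= 1 ->
  qf u (t *: x + (1 - t) *: y) <= t * qf u x + (1 - t) * qf u y.
Proof.
move=> hu t0 t1; have := qf_ge0 u (x - y) hu.
rewrite /qf !(dotvDl, dotvDr, dotvZl, dotvZr, dotvNl, dotvNr) (dotvC y x).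
set a := dotv x u; set b := dotv y u; set X := dotv x x; set Y := dotv y y; set Z := dotv x y.
move=> h.
have ht : 0 <= t * (1 - t) by rewrite mulr_ge0 // subr_ge0.
have := mulr_ge0 ht h.
move=> h2.
rewrite -subr_ge0; apply: (le_trans h2); rewrite le_eqVlt; apply/orP; left; apply/eqP; ring.
Qed.

Lemma cyl_convex u r : unit_vec u -> 0 < r -> convex (cyl u r).
Proof.
move=> hu r0; rewrite cylE // => x y t /= hx hy t0 t1.
apply: le_trans (qf_conv u x y t hu t0 t1) _.
have -> : r ^+ 2 = t * r ^+ 2 + (1 - t) * r ^+ 2 by ring.
by rewrite lerD // ler_wpM2l // subr_ge0.
Qed.

Lemma qfN u x : qf u (- x) = qf u x.
Proof. by rewrite /qf dotvNl dotvNr dotvNl opprK sqrrN. Qed.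

End Cyl.

Section Top.
Context {R : realType} {n : nat}.
Implicit Types (x y z u : 'rV[R]_n).

Lemma sum_cont (f : 'I_n -> 'rV[R]_n -> R) :
  (forall i, continuous (f i)) -> continuous (fun x => \sum_(i < n) f i x).
Proof.
move=> hf.
have -> : (fun x => \sum_(i < n) f i x) = \sum_(i < n) f i.
  by rewrite fct_sumE.
apply: (big_ind (fun g : 'rV[R]_n -> R => continuous g)) => //.
- by move=> x; exact: (@cst_continuous _ _ 0 x).
- move=> g h hg hh x; exact: (continuousD (hg x) (hh x)).
Qed.

Lemma coordc i : continuous (fun x : 'rV[R]_n => x ord0 i).
Proof. exact: coord_continuous. Qed.

Lemma dot_cont y : continuous (fun x : 'rV[R]_n => dotv x y).
Proof.
apply: sum_cont => i x.
exact: (@continuousM _ _ (fun x : 'rV[R]_n => x ord0 i) (fun=> y ord0 i) x (coordc i x) (@cst_continuous _ _ (y ord0 i) x)).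
Qed.

Lemma dotsq_cont : continuous (fun x : 'rV[R]_n => dotv x x).
Proof.
apply: sum_cont => i x.
exact: (@continuousM _ _ (fun x : 'rV[R]_n => x ord0 i) (fun x => x ord0 i) x (coordc i x) (coordc i x)).
Qed.

Lemma qf_cont u : continuous (qf u).
Proof.
move=> x.
have h2 := @continuousM _ _ (fun y => dotv y u) (fun y => dotv y u) x (dot_cont u x) (dot_cont u x).
exact: (continuousB (dotsq_cont x) h2).
Qed.

Lemma cyl_closed u r : unit_vec u -> 0 < r -> closed (cyl u r).
Proof.
move=> hu r0; rewrite cylE //.
have -> : [set x | qf u x <= r ^+ 2] = qf u @^-1` [set s | s <= r ^+ 2] by [].
apply: preimage_closed; last exact: closed_le.
by move=> x _; apply: qf_cont.
Qed.

End Top.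

Section Bd.
Context {R : realType} {n : nat}.
Implicit Types (x y z u v : 'rV[R]_n).

Lemma coord_norm x i : `|x ord0 i| <= `|x|.
Proof.
rewrite [leRHS]/Num.norm /= mx_normrE.
apply/bigmax_geP; right => /=; by exists (ord0, i).
Qed.

Lemma norm_le x (M : R) : 0 <= M -> (forall i, `|x ord0 i| <= M) -> `|x| <= M.
Proof.
move=> M0 h; rewrite [leLHS]/Num.norm /= mx_normrE.
apply: (big_ind (fun m : R => m <= M)) => //.
  by move=> p q hp hq; rewrite ge_max hp hq.
by move=> [i j] _ /=; rewrite ord1.
Qed.

Lemma not_par u v : unit_vec u -> unit_vec v -> ~ (exists c : R, u = c *: v) ->
  dotv u v ^+ 2 < 1.
Proof.
move=> hu hv hnp; have := CS u v; rewrite /unit_vec in hu hv; rewrite hu hv mulr1.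
rewrite le_eqVlt => /orP[/eqP h|//]; exfalso; apply: hnp.
exists (dotv u v); apply/eqP; rewrite -subr_eq0; apply/eqP/dotv_eq0.
rewrite !(dotvDl, dotvDr, dotvZl, dotvZr, dotvNl, dotvNr) (dotvC v u) hu hv.
rewrite expr2 in h; lra.
Qed.

Lemma main_bound u v x (r1 r2 : R) : unit_vec u -> unit_vec v ->
  dotv u v ^+ 2 < 1 -> qf u x <= r1 ^+ 2 -> qf v x <= r2 ^+ 2 ->
  dotv x x * (1 - `|dotv u v|) <= r1 ^+ 2 + r2 ^+ 2.
Proof.
move=> hu hv hc h1 h2.
have := CS x (dotv x u *: u + dotv x v *: v).
rewrite !(dotvDl, dotvDr, dotvZl, dotvZr) (dotvC v u).
rewrite /unit_vec in hu hv; rewrite hu hv.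
move: h1 h2; rewrite /qf.
set a := dotv x u; set b := dotv x v; set c := dotv u v; set N := dotv x x.
move=> h1 h2 hcs.
have N0 : 0 <= N by apply: dotv_ge0.
set S := a ^+ 2 + b ^+ 2.
have S0 : 0 <= S by rewrite addr_ge0 // sqr_ge0.
have habc : 2 * a * b * c <= `|c| * S.
  case: (lerP 0 c) => hc0.
    rewrite ger0_norm //; have := sqr_ge0 (a - b); rewrite /S; nra.
  rewrite ltr0_norm //; have := sqr_ge0 (a + b); rewrite /S; nra.
have hS2 : S ^+ 2 <= N * S * (1 + `|c|).
  apply: le_trans (_ : N * (S + 2 * a * b * c) <= _).
    have e1 : S ^+ 2 = (a * a + b * b) ^+ 2 by rewrite /S !expr2.
    have e2 : N * (S + 2 * a * b * c) = N * (a * (a * 1 + b * c) + b * (a * c + b * 1)).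
      by rewrite /S; ring.
    by rewrite e1 e2.
  have : N * (2 * a * b * c) <= N * (`|c| * S) by rewrite ler_wpM2l.
  lra.
have hS : S <= N * (1 + `|c|).
  have [->|Sp] := eqVneq S 0.
    by rewrite mulr_ge0 // addr_ge0 // normr_ge0.
  have Sp' : 0 < S by rewrite lt_def Sp S0.
  rewrite -(ler_pM2l Sp'); apply: le_trans hS2 _.
  by rewrite mulrA [S * N]mulrC.
rewrite /S in hS; lra.
Qed.

End Bd.

Theorem proposition3p2 (R : realType) (n : nat) (r1 r2 : R) (u v : 'rV[R]_n) :
  (2 <= n)%N -> 0 < r1 -> 0 < r2 ->
  unit_vec u -> unit_vec v ->
  ~ (exists c : R, u = c *: v) ->
  class_Ce (cyl u r1 `&` cyl v r2).
Proof.
move=> n2 r10 r20 hu hv hnp.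
have hc := not_par u v hu hv hnp.
have E1 := cylE u r1 hu r10; have E2 := cylE v r2 hv r20.
split; [split; [|split]|split].
- apply: bounded_closed_compact; last exact: closedI (cyl_closed u r1 hu r10) (cyl_closed v r2 hv r20).
  set d := `|dotv u v|.
  have d1 : d < 1.
    have d0 : 0 <= d by apply: normr_ge0.
    have : d ^+ 2 < 1 by rewrite /d real_normK // num_real.
    nra.
  set K := (r1 ^+ 2 + r2 ^+ 2) / (1 - d).
  have K0 : 0 <= K.
    apply: divr_ge0; first by rewrite addr_ge0 // sqr_ge0.
    by rewrite subr_ge0 ltW.
  exists (K + 1); split; first exact: num_real.
  move=> M hM x [h1 h2]; rewrite E1 E2 /= in h1 h2 *.
  have hN := main_bound u v x r1 r2 hu hv hc h1 h2; rewrite -/d in hN.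
  have hNK : dotv x x <= K by rewrite /K ler_pdivlMr // subr_gt0.
  apply: norm_le; first lra.
  move=> i; have := coord_le x i.
  have := normr_ge0 (x ord0 i); rewrite -real_normK ?num_real //.
  nra.
- move=> x y t [hx1 hx2] [hy1 hy2] t0 t1; split.
    exact: (cyl_convex u r1 hu r10).
  exact: (cyl_convex v r2 hv r20).
- exists 0; rewrite /interior /=.
  set rho := Num.min r1 r2.
  have rho0 : 0 < rho by rewrite lt_min r10 r20.
  have nR : (2 : R) <= n%:R by rewrite (ler_nat R 2 n).
  have nR0 : 0 < (n%:R : R) by lra.
  apply/nbhs_ballP; exists (rho / n%:R); first exact: divr_gt0.
  move=> z; rewrite -ball_normE /ball_ /= sub0r normrN => hz.
  have hzz : dotv z z <= rho ^+ 2.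
    apply: le_trans (_ : \sum_(i < n) (rho / n%:R) ^+ 2 <= _).
      apply: ler_sum => i _.
      have := coord_norm z i; have := normr_ge0 (z ord0 i).
      rewrite -expr2 -(real_normK (num_real (z ord0 i))); move=> h0 h1.
      have : `|z ord0 i| < rho / n%:R by apply: le_lt_trans hz.
      nra.
    rewrite sumr_const card_ord -[_ *+ n]mulr_natr.
    have -> : (rho / n%:R) ^+ 2 * n%:R = rho ^+ 2 / n%:R by field; lra.
    rewrite ler_pdivrMr //; have := sqr_ge0 rho; nra.
  have m1 : rho <= r1 by rewrite /rho ge_min lexx.
  have m2 : rho <= r2 by rewrite /rho ge_min lexx orbT.
  have hr1 : rho ^+ 2 <= r1 ^+ 2 by nra.
  have hr2 : rho ^+ 2 <= r2 ^+ 2 by nra.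
  rewrite E1 E2; split; rewrite /= /qf.
    by have := sqr_ge0 (dotv z u); lra.
  by have := sqr_ge0 (dotv z v); lra.
- move=> x [h1 h2]; rewrite E1 E2 /= in h1 h2 *; split; rewrite /= qfN //.
- exists [set p | p = (u, r1) \/ p = (v, r2)]; split.
    by move=> p [->|->] /=.
  apply/seteqP; split => x.
    by move=> [h1 h2] p [->|->].
  move=> h; split; [exact: (h (u, r1) (or_introl erefl))|exact: (h (v, r2) (or_intror erefl))].
Qed.
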